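(* Let $p\ge 3$ be an integer, let $T$ be a tree and let $\ell=|V(T^{p+1})|$. Then $T^{p+1}\subseteq P_\ell\vee K((p-1)\ell;p-1)$ and $T^{p+1}\subseteq \ell P_2\vee K(2(p-1)\ell;p-1)$.
   Context: For a graph $F$ and integer $p\ge1$, the edge blow-up $F^{p+1}$ is the graph obtained from $F$ by replacing each edge by a clique $K_{p+1}$ containing that edge, where the newly added vertices of the different cliques are all distinct. $P_\ell$ is the path on $\ell$ vertices, $\ell P_2$ is a matching of $\ell$ edges, $K(N;q)$ is the complete $q$-partite graph on $N$ vertices with part sizes differing by at most one, $\vee$ denotes the join of vertex-disjoint graphs, and $\subseteq$ means ''is isomorphic to a subgraph of''. *)

(* Defs.v *)
From mathcomp Require Import all_boot.
Set Implicit Arguments. Unset Strict Implicit. Unset Printing Implicit Defensive.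

(* Simple graphs: a symmetric irreflexive relation e on a finite vertex type. *)

Definition acyclic (V : finType) (e : rel V) : Prop :=
  ~ exists s : seq V, [/\ 3 <= size s, uniq s & cycle e s].

Definition connected (V : finType) (e : rel V) : Prop :=
  forall x y : V, connect e x y.

Definition is_tree (V : finType) (e : rel V) : Prop :=
  connected e /\ acyclic e.

Definition is_edge (V : finType) (e : rel V) (A : {set V}) : bool :=
  [exists u, [exists v, e u v && (A == [set u; v])]].

Definition edge_type (V : finType) (e : rel V) : finType :=
  {A : {set V} | is_edge e A}.

(* Edge blow-up F^{p+1}: vertices of F plus p-1 new vertices per edge;
   each edge together with its new vertices forms a clique K_{p+1}. *)
Definition blowup_type (V : finType) (e : rel V) (p : nat) : finType :=
  (V + (edge_type e * 'I_(p.-1)))%type.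

Definition blowup_rel (V : finType) (e : rel V) (p : nat) : rel (blowup_type e p) :=
  fun x y =>
    match x, y with
    | inl u, inl v => e u v
    | inl u, inr (A, _) => u \in val A
    | inr (A, _), inl u => u \in val A
    | inr (A, i), inr (B, j) => (A == B) && (i != j)
    end.

Definition join_rel (A B : finType) (eA : rel A) (eB : rel B) : rel (A + B)%type :=
  fun x y =>
    match x, y with
    | inl a, inl a' => eA a a'
    | inr b, inr b' => eB b b'
    | _, _ => true
    end.

Definition path_rel (n : nat) : rel 'I_n :=
  fun i j => (i.+1 == j :> nat) || (j.+1 == i :> nat).

Definition matching_rel (n : nat) : rel 'I_(2 * n) :=
  fun i j => (i./2 == j./2) && (i != j).

(* K(N;q): complete q-partite graph on N vertices with balanced parts,
   realized with parts the residue classes mod q. *)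
Definition kpart_rel (N q : nat) : rel 'I_N :=
  fun i j => i %% q != j %% q.

Definition subgraph (V W : finType) (eV : rel V) (eW : rel W) : Prop :=
  exists f : V -> W, injective f /\ forall x y, eV x y -> eW (f x) (f y).

Arguments blowup_rel {V} e p.
Arguments blowup_type {V} e p.
Arguments edge_type {V} e.
Arguments path_rel n : clear implicits.
Arguments matching_rel n : clear implicits.
Arguments kpart_rel N q : clear implicits.
Arguments join_rel {A B} eA eB.

(* Main.v *)
Require Import Defs.
From mathcomp Require Import all_boot zify.
Set Implicit Arguments. Unset Strict Implicit. Unset Printing Implicit Defensive.

Lemma nonuniq_split (T : eqType) (s : seq T) : ~~ uniq s ->
  exists x s1 s2 s3, s = s1 ++ x :: s2 ++ x :: s3.
Proof.
elim: s => [|y s IH] //=; rewrite negb_and negbK => /orP [ys|/IH [x [s1 [s2 [s3 ->]]]]].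
  case/splitPr: ys => a b. by exists y, [::], a, b.
by exists x, (y :: s1), s2, s3.
Qed.

Lemma no_odd_cycle (V : finType) (e : rel V) : irreflexive e -> acyclic e ->
  forall s : seq V, odd (size s) -> cycle e s -> False.
Proof.
move=> irr acy s; elim: {s}(size s) {-2}s (leqnn (size s)) => [|n IH] s Hs.
  by case: s Hs.
move=> Hodd Hc; case Hu: (uniq s).
  case: (leqP 3 (size s)) => H3.
    by apply: acy; exists s; split.
  case: s Hs Hodd Hc Hu H3 => [|x [|y [|z t]]] //= _ _.
  by rewrite irr.
have [x [s1 [s2 [s3 Es]]]] := nonuniq_split (negbT Hu).
have Hc' : cycle e (x :: s2 ++ x :: (s3 ++ s1)).
  by rewrite Es -(rot_cycle (size s1)) rot_size_cat /= -catA in Hc.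
move: Hc'; rewrite /= rcons_cat /= cat_path /= => /and3P [P1 E1 P2].
have C1 : cycle e (x :: s2) by rewrite /= rcons_path P1.
have C2 : cycle e (x :: (s3 ++ s1)) by [].
have Hsz : size s = (size s2).+1 + (size s3 + size s1).+1.
  rewrite Es !size_cat /= size_cat /=. move: (size s1) (size s2) (size s3) => a b c. lia.
have Hn : forall a b c : nat, a.+1 + (b + c).+1 <= n.+1 -> a < n /\ (b+c) < n by move=> a b c; lia.
have [Hn1 Hn2] := Hn _ _ _ (leq_trans (eq_leq (esym Hsz)) Hs).
move: Hodd; rewrite Hsz oddD; case Ho: (odd (size s2).+1) => /= Ho2.
  by apply: (IH (x :: s2)) => //=.
apply: (IH (x :: (s3 ++ s1))) => //=; rewrite size_cat //; by rewrite oddD in Ho2.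
Qed.
Lemma tree_2col (V : finType) (e : rel V) : symmetric e -> irreflexive e -> is_tree e ->
  exists c : V -> bool, forall u v, e u v -> c u != c v.
Proof.
move=> sym irr [con acy].
case: (pickP (@predT V)) => [r _|h]; last by exists (fun _ => false) => u; have := h u.
have ex : forall x, exists p : seq V, path e r p && (x == last r p).
  move=> x; case/connectP: (con r x) => p P1 P2; exists p; by rewrite P1 P2 eqxx.
pose P x := xchoose (ex x).
have PP : forall x, path e r (P x) /\ x = last r (P x).
  by move=> x; case/andP: (xchooseP (ex x)) => H1 /eqP H2.
exists (fun x => odd (size (P x))) => u v euv; apply/negP => /eqP Hc.
have [Pu Eu] := PP u; have [Pv Ev] := PP v.
apply: (@no_odd_cycle V e irr acy (P u ++ v :: rev (belast r (P v)))).
  by rewrite size_cat /= size_rev size_belast oddD /= Hc; case: (odd _).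
rewrite (cycle_path r).
have -> : last r (P u ++ v :: rev (belast r (P v))) = r.
  rewrite last_cat /=; move: Ev; case: (P v) => [|y t] /= -> //.
  by rewrite rev_cons last_rcons.
rewrite cat_path Pu /= -Eu euv /=.
have := rev_path e r (P v); rewrite -Ev => ->.
by rewrite (@eq_path _ _ e) // => a b; rewrite /= sym.
Qed.

Lemma gen_embed (B : finType) (eB : rel B) (n m q : nat) (hP : rel 'I_n)
  (side : pred B) (si ci : B -> nat) (Hs : forall x, si x < n) (Hci : forall x, ci x < m) :
  (forall x y, side x -> side y -> si x = si y -> x = y) ->
  (forall x y, ~~ side x -> ~~ side y -> ci x = ci y -> x = y) ->
  (forall x y, eB x y -> side x -> side y -> hP (Ordinal (Hs x)) (Ordinal (Hs y))) ->
  (forall x y, eB x y -> ~~ side x -> ~~ side y -> ci x %% q != ci y %% q) ->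
  subgraph eB (join_rel hP (kpart_rel m q)).
Proof.
move=> I1 I2 E1 E2.
exists (fun x => if side x then inl (Ordinal (Hs x)) else inr (Ordinal (Hci x))); split.
  move=> x y; case Sx: (side x); case Sy: (side y) => // H.
    by apply: I1 => //; case: H.
  by apply: I2; rewrite ?Sx ?Sy //; case: H.
move=> x y exy; case Sx: (side x); case Sy: (side y) => //=.
  by apply: E1.
by apply: E2; rewrite ?Sx ?Sy.
Qed.

Section Main.
Variables (p : nat) (V : finType) (e : rel V) (c : V -> bool).

Definition side (x : blowup_type e p) : bool :=
  match x with inr (A, i) => i < 2 | _ => false end.
Definition sidx (x : blowup_type e p) : nat :=
  match x with inr (A, i) => if i < 2 then 2 * enum_rank A + i else enum_rank x
  | inl _ => enum_rank x end.
Definition col (x : blowup_type e p) : nat :=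
  match x with inl u => c u | inr (_, i) => i end.
Definition cidx (x : blowup_type e p) : nat := (p - 1) * enum_rank x + col x.

Hypothesis p3 : 3 <= p.
Hypothesis Hc : forall u v, e u v -> c u != c v.

Lemma card_blow : #|blowup_type e p| = #|V| + #|edge_type e| * p.-1.
Proof. by rewrite /blowup_type card_sum card_prod card_ord. Qed.

Lemma sidx_lt x : sidx x < #|blowup_type e p|.
Proof.
case: x => [u|[A i]] /=; first exact: ltn_ord.
case: ifP => [i2|_]; last exact: ltn_ord.
rewrite card_blow; have := ltn_ord (enum_rank A).
move: (nat_of_ord (enum_rank A)) i2 => a i2 ha.
have {}ha : a < #|edge_type e| := ha.
move: (i : nat) i2 => i' i2.
have : #|edge_type e| * 2 <= #|edge_type e| * p.-1 by rewrite leq_mul2l; apply/orP; right; case: p p3 => [|[|[|]]].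
lia.
Qed.

Lemma col_lt x : col x < p - 1.
Proof.
case: x => [u|[A i]] /=; first by case: (c u); lia.
by have := ltn_ord i; lia.
Qed.

Lemma cidx_lt x : cidx x < (p - 1) * #|blowup_type e p|.
Proof.
rewrite /cidx; have ha := ltn_ord (enum_rank x); have hb := col_lt x.
move: (nat_of_ord (enum_rank x)) ha => a ha.
have {}ha : a < #|blowup_type e p| := ha.
move: (col x) hb => b hb.
have : (p - 1) * a.+1 <= (p - 1) * #|blowup_type e p| by rewrite leq_mul2l ha orbT.
by rewrite mulnS; lia.
Qed.

Lemma side_inj x y : side x -> side y -> sidx x = sidx y -> x = y.
Proof.
case: x => [u|[A i]] //; case: y => [v|[B j]] //= hi hj; rewrite hi hj => H.
have [E1 E2] : nat_of_ord (enum_rank A) = enum_rank B /\ nat_of_ord i = j.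
  move: H hi hj; move: (nat_of_ord i) (nat_of_ord j) (nat_of_ord (enum_rank A)) (nat_of_ord (enum_rank B)) => i' j' a b H hi hj; lia.
have -> : A = B by apply: enum_rank_inj; apply: val_inj.
by have -> : i = j by apply: val_inj.
Qed.

Lemma cls_inj x y : cidx x = cidx y -> x = y.
Proof.
move=> H; apply: enum_rank_inj; apply: val_inj.
have q0 : 0 < p - 1 by lia.
move: (congr1 (fun z => z %/ (p-1)) H); rewrite /cidx /= ![(p-1) * _]mulnC !divnMDl // !divn_small ?col_lt //.
by rewrite !addn0.
Qed.

Lemma side_edge x y : blowup_rel e p x y -> side x -> side y ->
  exists a, (sidx x = 2*a /\ sidx y = 2*a+1) \/ (sidx x = 2*a+1 /\ sidx y = 2*a).
Proof.
case: x => [u|[A i]] //; case: y => [v|[B j]] //= /andP [/eqP <- ij] hi hj; rewrite hi hj.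
have ij' : nat_of_ord i != nat_of_ord j := ij.
move: ij' hi hj; move: (nat_of_ord i) (nat_of_ord j) => i' j' ij2 hi hj.
exists (enum_rank A).
case: i' j' ij2 hi hj => [|[|?]] [|[|?]] //= _ _ _; rewrite ?addn0 ?addn1; by [left|right].
Qed.

Lemma cls_edge x y : blowup_rel e p x y -> ~~ side x -> ~~ side y ->
  cidx x %% (p - 1) != cidx y %% (p - 1).
Proof.
rewrite /cidx ![(p-1) * _]mulnC !modnMDl !modn_small ?col_lt //.
case: x => [u|[A i]]; case: y => [v|[B j]] //=.
- by move=> /Hc; case: (c u); case: (c v).
- move=> _ _ hj; have := hj; move: (nat_of_ord j) => j' hj'; case: (c u) => /=; lia.
- move=> _ hi _; have := hi; move: (nat_of_ord i) => i' hi'; case: (c v) => /=; lia.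
- by case/andP.
Qed.

End Main.

Theorem lemma2p1 (p : nat) (V : finType) (e : rel V) :
  3 <= p -> symmetric e -> irreflexive e -> is_tree e ->
  let l := #|blowup_type e p| in
  subgraph (blowup_rel e p)
    (join_rel (path_rel l) (kpart_rel ((p - 1) * l) (p - 1))) /\
  subgraph (blowup_rel e p)
    (join_rel (matching_rel l) (kpart_rel (2 * (p - 1) * l) (p - 1))).
Proof.
move=> p3 sym irr tree l; have [c Hc] := tree_2col sym irr tree.
have h1 : forall a, (2 * a)./2 = a by move=> a; rewrite mul2n doubleK.
have h2 : forall a, (2 * a + 1)./2 = a.
  by move=> a; rewrite addn1 mul2n; exact: (half_bit_double a true).
split.
  apply: (@gen_embed _ (blowup_rel e p) l ((p-1)*l) (p-1) (path_rel l) (@side p V e)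
     (@sidx p V e) (cidx c) (sidx_lt p3) (cidx_lt c p3)).
  - by move=> x y; apply: side_inj.
  - by move=> x y _ _; apply: cls_inj.
  - move=> x y /side_edge H sx sy; have [a [[E1 E2]|[E1 E2]]] := H sx sy;
      rewrite /path_rel /= E1 E2; lia.
  - move=> x y exy sx sy; exact: (cls_edge p3 Hc exy sx sy).
have S2 : forall x : blowup_type e p, sidx x < 2 * l.
  by move=> x; apply: leq_trans (sidx_lt p3 x) _; rewrite leq_pmull.
have C2 : forall x : blowup_type e p, cidx c x < 2 * (p - 1) * l.
  by move=> x; apply: leq_trans (cidx_lt c p3 x) _; rewrite -mulnA leq_pmull.
apply: (@gen_embed _ (blowup_rel e p) (2 * l) (2 * (p-1)*l) (p-1) (matching_rel l) (@side p V e)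
     (@sidx p V e) (cidx c) S2 C2).
- by move=> x y; apply: side_inj.
- by move=> x y _ _; apply: cls_inj.
- move=> x y /side_edge H sx sy; have [a [[E1 E2]|[E1 E2]]] := H sx sy;
    change (((sidx x)./2 == (sidx y)./2) && (sidx x != sidx y)); rewrite E1 E2 h1 h2 eqxx /=; lia.
- move=> x y exy sx sy; exact: (cls_edge p3 Hc exy sx sy).
Qed.
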